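(* Let $S,T$ be ordered trees, let $f\colon T\to S$ be a rigid surjection, and let $x$ be a leaf of $S$. Let $y$ be the leaf of $T$ that is $f$-conjugate to $x$. Then the image of $f_x=f\upharpoonright T^y$ equals $S^x$, and $f_x\colon T^y\to S^x$ is a rigid surjection.
   Context: A tree is a finite, non-empty poset $(T,\sqsubseteq_T)$ with a smallest element (root) in which the predecessors of each element form a chain (each element is its own predecessor); $v\wedge_T w$ is the largest common predecessor. An ordered tree has a fixed linear order on the immediate successors of each node, inducing the lexicographic linear order $\leq_T$: $v\leq_T w$ if $v\sqsubseteq_T w$, and for incomparable $v,w$, $v\leq_T w$ iff the immediate successor of $v\wedge_T w$ below $v$ precedes the one below $w$. A morphism preserves $\wedge$, is $\leq$-monotone and maps root to root; an embedding is an injective morphism. A function $f\colon T\to S$ is a rigid surjection if there is a morphism $e\colon S\to T$ (unique, called the injection of $f$) with $f\circ e={\rm id}_S$ and $e(f(w))\sqsubseteq_T w$ for all $w$. For $v\in T$, $T^v=\{w\in T\mid w\leq_T v\}$ (ordered tree with inherited orders). A leaf is a $\sqsubseteq$-maximal node. For an embedding $i\colon S\to T$, a leaf $y$ of $T$ is $i$-conjugate to a leaf $x$ of $S$ if: (i) when $x$ is the $\leq_S$-largest leaf of $S$, $y$ is the $\leq_T$-largest leaf of $T$; (ii) otherwise, with $x'$ the $\leq_S$-smallest leaf with $x<_S x'$, $y$ is the $\leq_T$-largest leaf with $y<_T i(x')$ and $i(x)\wedge_T i(x')=y\wedge_T i(x')$. A leaf $y$ of $T$ is $f$-conjugate to $x$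 if it is $i$-conjugate to $x$ for $i$ the injection of $f$ (such $y$ exists and is unique). *)

(* Defs.v *)
From mathcomp Require Import all_boot.
Set Implicit Arguments. Unset Strict Implicit. Unset Printing Implicit Defensive.

(* Raw data of a finite ordered tree: carrier, the tree order v ⊑ w (anc v w),
   and a strict order sib on immediate successors of a common node. *)
Record otree := OTree {
  ot_sort :> finType;
  ot_anc : rel ot_sort;
  ot_sib : rel ot_sort
}.

Section TreeNotions.
Variable T : otree.
Local Notation anc := (@ot_anc T).
Local Notation sib := (@ot_sib T).

(* All notions are relative to a subset A of nodes, with inherited orders. *)
Definition is_meet (A : {set T}) (v w m : T) : bool :=
  [&& v \in A, w \in A, m \in A, anc m v, anc m w &
      [forall u in A, (anc u v && anc u w) ==> anc u m]].

Definition is_root (A : {set T}) (r : T) : bool :=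
  (r \in A) && [forall v in A, anc r v].

Definition is_leaf (A : {set T}) (x : T) : bool :=
  (x \in A) && [forall w in A, anc x w ==> (w == x)].

Definition isucc (A : {set T}) (v w : T) : bool :=
  [&& v \in A, w \in A, anc v w, v != w &
      [forall u in A, (anc v u && anc u w) ==> ((u == v) || (u == w))]].

(* lexicographic order <=_T induced by the sibling orders *)
Definition lex (A : {set T}) (v w : T) : bool :=
  [&& v \in A, w \in A &
    (anc v w ||
     [&& ~~ anc w v &
         [exists m, exists c, exists c',
           [&& is_meet A v w m, isucc A m c, isucc A m c', anc c v, anc c' w
             & sib c c']]])].

Definition lex_lt (A : {set T}) (v w : T) : bool := lex A v w && (v != w).

(* T^v = { w | w <=_T v } *)
Definition lexdown (A : {set T}) (v : T) : {set T} := [set w in A | lex A w v].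

Definition ordered_tree : Prop :=
  let A := [set: T] in
  [/\ (forall v, anc v v),
      (forall v w, anc v w -> anc w v -> v = w),
      (forall u v w, anc u v -> anc v w -> anc u w),
      (exists r, is_root A r) &
      (forall u v w, anc u w -> anc v w -> anc u v || anc v u)] /\
  [/\ (forall c c', sib c c' -> exists m, isucc A m c /\ isucc A m c'),
      (forall c, ~~ sib c c),
      (forall c1 c2 c3, sib c1 c2 -> sib c2 c3 -> sib c1 c3) &
      (forall m c c', isucc A m c -> isucc A m c' -> c != c' ->
                       sib c c' || sib c' c)].

Definition largest_leaf (A : {set T}) (y : T) : Prop :=
  is_leaf A y /\ forall z, is_leaf A z -> lex A z y.

Definition next_leaf (A : {set T}) (x x' : T) : Prop :=
  [/\ is_leaf A x', lex_lt A x x' &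
      forall z, is_leaf A z -> lex_lt A x z -> lex A x' z].

End TreeNotions.

Section Maps.
Variables S T : otree.

Definition morphism_on (A : {set S}) (B : {set T}) (e : S -> T) : Prop :=
  [/\ (forall s, s \in A -> e s \in B),
      (forall v w m, is_meet A v w m -> is_meet B (e v) (e w) (e m)),
      (forall v w, lex A v w -> lex B (e v) (e w)) &
      (forall r, is_root A r -> is_root B (e r))].

Definition embedding (e : S -> T) : Prop :=
  morphism_on [set: S] [set: T] e /\ injective e.

Definition i_conjugate (i : S -> T) (x : S) (y : T) : Prop :=
  [/\ is_leaf [set: T] y,
      (largest_leaf [set: S] x -> largest_leaf [set: T] y) &
      (forall x', next_leaf [set: S] x x' ->
        let P z := [/\ is_leaf [set: T] z, lex_lt [set: T] z (i x') &
                       exists m, is_meet [set: T] (i x) (i x') m /\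
                                 is_meet [set: T] z (i x') m] in
        P y /\ forall z, P z -> lex [set: T] z y)].
End Maps.

Section Rigid.
Variables T S : otree.

Definition injection_on (A : {set T}) (B : {set S}) (f : T -> S) (e : S -> T) :=
  [/\ morphism_on B A e,
      (forall s, s \in B -> f (e s) = s) &
      (forall w, w \in A -> ot_anc (e (f w)) w)].

Definition rigid_surj_on (A : {set T}) (B : {set S}) (f : T -> S) : Prop :=
  (forall w, w \in A -> f w \in B) /\ exists e, injection_on A B f e.

Definition rigid_surj (f : T -> S) : Prop := rigid_surj_on [set: T] [set: S] f.

Definition f_conjugate (f : T -> S) (x : S) (y : T) : Prop :=
  exists e, injection_on [set: T] [set: S] f e /\ i_conjugate e x y.
End Rigid.

(* Main.v *)
Require Import Defs.
From mathcomp Require Import all_boot.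
Set Implicit Arguments. Unset Strict Implicit. Unset Printing Implicit Defensive.

Lemma exmin (T : finType) (P : pred T) (F : T -> nat) x0 :
  P x0 -> exists x, P x /\ forall y, P y -> F x <= F y.
Proof. move=> Px0; case: (arg_minnP F Px0) => x Px H; by exists x. Qed.

Lemma exmax (T : finType) (P : pred T) (F : T -> nat) x0 :
  P x0 -> exists x, P x /\ forall y, P y -> F y <= F x.
Proof. move=> Px0; case: (arg_maxnP F Px0) => x Px H; by exists x. Qed.

Section Tree.
Variable U : otree.
Hypothesis HU : ordered_tree U.
Local Notation anc := (@ot_anc U).
Local Notation sib := (@ot_sib U).
Local Notation A0 := [set: U].

Lemma ancR v : anc v v. Proof. by have [[h _ _ _ _] _] := HU. Qed.
Lemma ancA v w : anc v w -> anc w v -> v = w. Proof. by have [[_ h _ _ _] _] := HU; apply: h. Qed.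
Lemma ancT u v w : anc u v -> anc v w -> anc u w. Proof. by have [[_ _ h _ _] _] := HU; apply: h. Qed.
Lemma ancC u v w : anc u w -> anc v w -> anc u v || anc v u.
Proof. by have [[_ _ _ _ h] _] := HU; apply: h. Qed.
Lemma rootE : exists r, is_root A0 r. Proof. by have [[_ _ _ h _] _] := HU. Qed.
Lemma sibI c : ~~ sib c c. Proof. by have [_ [_ h _ _]] := HU. Qed.
Lemma sibT c1 c2 c3 : sib c1 c2 -> sib c2 c3 -> sib c1 c3.
Proof. by have [_ [_ _ h _]] := HU; apply: h. Qed.
Lemma sibC m c c' : isucc A0 m c -> isucc A0 m c' -> c != c' -> sib c c' || sib c' c.
Proof. by have [_ [_ _ _ h]] := HU; apply: h. Qed.

Lemma isuccP m c : isucc A0 m c ->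
  [/\ anc m c, m != c & forall u, anc m u -> anc u c -> u = m \/ u = c].
Proof.
rewrite /isucc !in_setT /= => /and3P[h1 h2 /forallP h3]; split=> // u h4 h5.
move: (h3 u); rewrite in_setT h4 h5 /= => /orP[/eqP|/eqP]; auto.
Qed.

Lemma isuccI m c : anc m c -> m != c ->
  (forall u, anc m u -> anc u c -> u = m \/ u = c) -> isucc A0 m c.
Proof.
move=> h1 h2 h3; rewrite /isucc !in_setT h1 h2 /=; apply/forallP => u.
rewrite in_setT /=; apply/implyP => /andP[h4 h5].
by case: (h3 u h4 h5) => ->; rewrite eqxx ?orbT.
Qed.

Lemma isucc_below m c x : isucc A0 m c -> anc x c -> x != c -> anc x m.
Proof.
case/isuccP => hmc _ h hxc nxc; case/orP: (ancC hxc hmc) => // hmx.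
case: (h x hmx hxc) => [->|e]; first exact: ancR.
by rewrite e eqxx in nxc.
Qed.

Lemma two_children m c c' z : isucc A0 m c -> isucc A0 m c' -> sib c c' ->
  anc c z -> anc c' z -> False.
Proof.
move=> hc hc' hs h1 h2.
have [hmc nmc _] := isuccP hc; have [hmc' nmc' _] := isuccP hc'.
case/orP: (ancC h1 h2) => h.
- case: (eqVneq c c') => [e|ne]; first by move: hs; rewrite e (negbTE (sibI c')).
  have hcm := isucc_below hc' h ne.
  by rewrite (ancA hmc hcm) eqxx in nmc.
- case: (eqVneq c' c) => [e|ne]; first by move: hs; rewrite e (negbTE (sibI c)).
  have hcm := isucc_below hc h ne.
  by rewrite (ancA hmc' hcm) eqxx in nmc'.
Qed.

Definition br v w := exists m c c',
  [/\ isucc A0 m c, isucc A0 m c', anc c v, anc c' w & sib c c'].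

Lemma br_nanc v w : br v w -> ~~ anc v w /\ ~~ anc w v.
Proof.
case=> m [c [c' [h1 h2 h3 h4 h5]]]; split; apply/negP => h.
- exact: (two_children h1 h2 h5 (ancT h3 h) h4).
- exact: (two_children h1 h2 h5 h3 (ancT h4 h)).
Qed.

Lemma meetP v w m : is_meet A0 v w m ->
  [/\ anc m v, anc m w & forall u, anc u v -> anc u w -> anc u m].
Proof.
rewrite /is_meet !in_setT /= => /and3P[h1 h2 /forallP h3]; split=> // u h4 h5.
by move: (h3 u); rewrite in_setT h4 h5.
Qed.

Lemma meetI v w m : anc m v -> anc m w ->
  (forall u, anc u v -> anc u w -> anc u m) -> is_meet A0 v w m.
Proof.
move=> h1 h2 h3; rewrite /is_meet !in_setT h1 h2 /=; apply/forallP => u.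
rewrite in_setT /=; apply/implyP => /andP[h4 h5]; exact: h3.
Qed.

Lemma meet_uniq v w m1 m2 : is_meet A0 v w m1 -> is_meet A0 v w m2 -> m1 = m2.
Proof.
case/meetP=> a1 b1 c1; case/meetP=> a2 b2 c2; apply: ancA; [exact: c2|exact: c1].
Qed.

Lemma br_meet v w m c c' : isucc A0 m c -> isucc A0 m c' -> anc c v ->
  anc c' w -> sib c c' -> is_meet A0 v w m.
Proof.
move=> h1 h2 h3 h4 h5.
have [hmc _ _] := isuccP h1; have [hmc' _ _] := isuccP h2.
apply: meetI; [exact: ancT hmc h3|exact: ancT hmc' h4|] => u hu hw.
case/orP: (ancC hu h3) => h.
- case: (eqVneq u c) => [e|ne]; last exact: isucc_below h1 h ne.
  by subst u; case: (two_children h1 h2 h5 hw h4).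
- by case: (two_children h1 h2 h5 (ancT h hw) h4).
Qed.

Lemma lexE v w : lex A0 v w <-> anc v w \/ br v w.
Proof.
rewrite /lex !in_setT /=; split.
- case/orP=> [h|/andP[_ /existsP[m /existsP[c /existsP[c' H]]]]]; [by left|right].
  case/and5P: H => _ h1 h2 h3 /andP[h4 h5]; by exists m, c, c'.
- case=> [->//|hb]; apply/orP; case: (boolP (anc v w)) => hvw; [by left|right].
  have [_ nwv] := br_nanc hb; rewrite nwv /=.
  case: hb => m [c [c' [h1 h2 h3 h4 h5]]].
  apply/existsP; exists m; apply/existsP; exists c; apply/existsP; exists c'.
  by rewrite (br_meet h1 h2 h3 h4 h5) h1 h2 h3 h4 h5.
Qed.

Lemma lexR v : lex A0 v v. Proof. by apply/lexE; left; exact: ancR. Qed.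
Lemma anc_lex v w : anc v w -> lex A0 v w. Proof. by move=> h; apply/lexE; left. Qed.
Lemma br_lex v w : br v w -> lex A0 v w. Proof. by move=> h; apply/lexE; right. Qed.

Lemma br_trans u v w : br u v -> br v w -> br u w.
Proof.
case=> m1 [a [b [h1 h2 h3 h4 h5]]]; case=> m2 [c [d [k1 k2 k3 k4 k5]]].
case/orP: (ancC h4 k3) => h.
- case: (eqVneq b c) => [e|ne].
  + subst c.
    have [hm1 n1 _] := isuccP h2; have [hm2 n2 _] := isuccP k1.
    have e12 : m1 = m2.
      apply: ancA.
      * exact: isucc_below k1 hm1 n1.
      * exact: isucc_below h2 hm2 n2.
    subst m2; exists m1, a, d; split=> //; exact: sibT h5 k5.
  + have hbm := isucc_below k1 h ne; have [hm2 _ _] := isuccP k2.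
    exists m1, a, b; split=> //; exact: ancT hbm (ancT hm2 k4).
- case: (eqVneq c b) => [e|ne].
  + subst c.
    have [hm1 n1 _] := isuccP h2; have [hm2 n2 _] := isuccP k1.
    have e12 : m1 = m2.
      apply: ancA.
      * exact: isucc_below k1 hm1 n1.
      * exact: isucc_below h2 hm2 n2.
    subst m2; exists m1, a, d; split=> //; exact: sibT h5 k5.
  + have hcm := isucc_below h2 h ne; have [hm1 _ _] := isuccP h1.
    exists m2, c, d; split=> //; exact: ancT hcm (ancT hm1 h3).
Qed.

Lemma anc_br u v w : anc u v -> br v w -> anc u w \/ br u w.
Proof.
move=> huv [m [c [c' [h1 h2 h3 h4 h5]]]].
case/orP: (ancC huv h3) => h.
- case: (eqVneq u c) => [e|ne].
  + by subst u; right; exists m, c, c'.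
  + left; have hum := isucc_below h1 h ne; have [hm _ _] := isuccP h2.
    exact: ancT hum (ancT hm h4).
- by right; exists m, c, c'.
Qed.

Lemma br_anc u v w : br u v -> anc v w -> br u w.
Proof. move=> [m [c [c' [h1 h2 h3 h4 h5]]]] h; exists m, c, c'; split=> //; exact: ancT h4 h. Qed.

Lemma br_up u u' v : br u v -> anc u u' -> br u' v.
Proof. move=> [m [c [c' [h1 h2 h3 h4 h5]]]] h; exists m, c, c'; split=> //; exact: ancT h3 h. Qed.

Lemma lex_trans u v w : lex A0 u v -> lex A0 v w -> lex A0 u w.
Proof.
move=> /lexE[h|h] /lexE[k|k]; apply/lexE.
- left; exact: ancT h k.
- exact: anc_br h k.
- right; exact: br_anc h k.
- right; exact: br_trans h k.
Qed.

Lemma lex_anti v w : lex A0 v w -> lex A0 w v -> v = w.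
Proof.
move=> /lexE[h|h] /lexE[k|k].
- exact: ancA.
- by have [_ /negP] := br_nanc k.
- by have [_ /negP] := br_nanc h.
- by have [/negP n _] := br_nanc (br_trans h k); case: n; exact: ancR.
Qed.

Definition preds v := [set z | anc z v].
Definition succs v := [set z | anc v z].

Lemma preds_lt a b : anc a b -> a != b -> #|preds a| < #|preds b|.
Proof.
move=> h n; apply: proper_card; apply/properP; split.
- apply/subsetP => z; rewrite !inE => hz; exact: ancT hz h.
- exists b; rewrite !inE ?ancR //; apply/negP => hba.
  by rewrite (ancA h hba) eqxx in n.
Qed.

Lemma succs_lt a b : anc a b -> a != b -> #|succs b| < #|succs a|.
Proof.
move=> h n; apply: proper_card; apply/properP; split.
- apply/subsetP => z; rewrite !inE => hz; exact: ancT h hz.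
- exists a; rewrite !inE ?ancR //; apply/negP => hba.
  by rewrite (ancA h hba) eqxx in n.
Qed.

Lemma leafP x w : is_leaf A0 x -> anc x w -> w = x.
Proof.
rewrite /is_leaf in_setT /= => /forallP h hw; move: (h w).
by rewrite in_setT hw => /eqP.
Qed.

Lemma leaf_above s : exists l, is_leaf A0 l /\ anc s l.
Proof.
have [l [hl hmin]] := exmin (fun u => #|succs u|) (ancR s : [pred u | anc s u] s).
exists l; split=> //; rewrite /is_leaf in_setT /=; apply/forallP => w.
rewrite in_setT /=; apply/implyP => hw; apply/negPn/negP => ne.
have := hmin w (ancT hl hw); rewrite leqNgt; move/negP; apply.
apply: succs_lt hw _; by rewrite eq_sym.
Qed.

Lemma lex_total v w : lex A0 v w \/ lex A0 w v.
Proof.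
case: (boolP (anc v w)) => hvw; first by left; exact: anc_lex.
case: (boolP (anc w v)) => hwv; first by right; exact: anc_lex.
have [r /andP[_ /forallP hr]] := rootE.
have hr' z : anc r z by move: (hr z); rewrite in_setT.
pose P := [pred u | anc u v && anc u w].
have Pr : P r by rewrite /P /= !hr'.
have [m [/andP[hmv hmw] hmax]] := exmax (fun u => #|preds u|) Pr.
have hm u : anc u v -> anc u w -> anc u m.
  move=> h1 h2; case/orP: (ancC h1 hmv) => // h.
  case: (eqVneq m u) => [->|ne]; first exact: ancR.
  have := hmax u _ : #|preds u| <= #|preds m|.
  by rewrite /P /= h1 h2 => /(_ isT); rewrite leqNgt preds_lt.
have child z : anc m z -> m != z -> exists c, isucc A0 m c /\ anc c z.
  move=> hmz nmz.
  pose Q := [pred u | [&& anc m u, anc u z & u != m]].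
  have Qz : Q z by rewrite /Q /= hmz ancR eq_sym nmz.
  have [c [/and3P[hmc hcz ncm] hmin]] := exmin (fun u => #|preds u|) Qz.
  exists c; split=> //; apply: isuccI => //; first by rewrite eq_sym.
  move=> u hmu huc; case: (eqVneq u m) => [->|num]; first by left.
  right; apply/eqP/negPn/negP => nuc.
  have := hmin u; rewrite /Q /= hmu (ancT huc hcz) num => /(_ isT).
  by rewrite leqNgt preds_lt.
have nmv : m != v by apply/negP => /eqP e; subst m; rewrite hmw in hvw.
have nmw : m != w by apply/negP => /eqP e; subst m; rewrite hmv in hwv.
have [c [hc hcv]] := child v hmv nmv.
have [c' [hc' hcw]] := child w hmw nmw.
have ncc : c != c'.
  apply/negP => /eqP e; subst c'.
  have [hmc nmc _] := isuccP hc.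
  by rewrite (ancA hmc (hm c hcv hcw)) eqxx in nmc.
case/orP: (sibC hc hc' ncc) => hs.
- left; apply: br_lex; by exists m, c, c'.
- right; apply: br_lex; by exists m, c', c.
Qed.

Variable y : U.
Local Notation D := (lexdown A0 y).

Lemma inD z : (z \in D) = lex A0 z y.
Proof. by rewrite /lexdown inE in_setT. Qed.

Lemma D_down u w : anc u w -> w \in D -> u \in D.
Proof. rewrite !inD => h; apply: lex_trans; exact: anc_lex. Qed.

Lemma meet_DA v w m : is_meet D v w m -> is_meet A0 v w m.
Proof.
rewrite /is_meet !in_setT /= => /and5P[hv hw hm h1 /andP[h2 /forallP h3]].
rewrite h1 h2 /=; apply/forallP => u; rewrite in_setT /=; apply/implyP => /andP[h4 h5].
by move: (h3 u); rewrite (D_down h4 hv) h4 h5.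
Qed.

Lemma meet_AD v w m : v \in D -> w \in D -> is_meet A0 v w m -> is_meet D v w m.
Proof.
move=> hv hw /meetP[h1 h2 h3]; rewrite /is_meet hv hw (D_down h1 hv) h1 h2 /=.
apply/forallP => u; apply/implyP => _; apply/implyP => /andP[h4 h5]; exact: h3.
Qed.

Lemma isucc_DA m c : isucc D m c -> isucc A0 m c.
Proof.
rewrite /isucc /= => /and5P[hm hc h1 h2 /forallP h3].
apply: isuccI => // u h4 h5; move: (h3 u); rewrite (D_down h5 hc) h4 h5 /=.
by case/orP=> /eqP; auto.
Qed.

Lemma isucc_AD m c : c \in D -> isucc A0 m c -> isucc D m c.
Proof.
move=> hc /isuccP[h1 h2 h3]; rewrite /isucc hc (D_down h1 hc) h1 h2 /=.
apply/forallP => u; apply/implyP => _; apply/implyP => /andP[h4 h5].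
by case: (h3 u h4 h5) => ->; rewrite eqxx ?orbT.
Qed.

Lemma lex_DA v w : lex D v w -> lex A0 v w.
Proof.
rewrite /lex !in_setT /= => /and3P[_ _ /orP[->//|/andP[h1 /existsP[m /existsP[c /existsP[c' H]]]]]].
apply/orP; right; rewrite h1 /=; apply/existsP; exists m; apply/existsP; exists c.
apply/existsP; exists c'; case/and5P: H => k1 k2 k3 k4 /andP[k5 k6].
by rewrite (meet_DA k1) (isucc_DA k2) (isucc_DA k3) k4 k5 k6.
Qed.

Lemma lex_AD v w : v \in D -> w \in D -> lex A0 v w -> lex D v w.
Proof.
move=> hv hw /lexE[h|h]; rewrite /lex hv hw /=; first by rewrite h.
have [nvw nwv] := br_nanc h; rewrite (negbTE nvw) nwv /=.
case: h => m [c [c' [h1 h2 h3 h4 h5]]].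
apply/existsP; exists m; apply/existsP; exists c; apply/existsP; exists c'.
rewrite (meet_AD hv hw (br_meet h1 h2 h3 h4 h5)) (isucc_AD (D_down h3 hv) h1).
by rewrite (isucc_AD (D_down h4 hw) h2) h3 h4 h5.
Qed.

Lemma root_DA r : is_root D r -> is_root A0 r.
Proof.
case/andP=> hr /forallP h; have [r0 /andP[_ /forallP h0]] := rootE.
have hr0 : r0 \in D by rewrite inD; apply: anc_lex; move: (h0 y); rewrite in_setT.
have e : r = r0.
  apply: ancA; first by move: (h r0); rewrite hr0.
  by move: (h0 r); rewrite in_setT.
subst r0; rewrite /is_root in_setT /=; apply/forallP => u; move: (h0 u); by [].
Qed.

Lemma root_AD r : is_root A0 r -> is_root D r.
Proof.
case/andP=> _ /forallP h.
have hr : r \in D by rewrite inD; apply: anc_lex; move: (h y); rewrite in_setT.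
rewrite /is_root hr /=; apply/forallP => u; apply/implyP => _.
by move: (h u); rewrite in_setT.
Qed.

End Tree.
Theorem lemma4p14 (S T : otree) (HS : ordered_tree S) (HT : ordered_tree T)
  (f : T -> S) (hf : rigid_surj f)
  (x : S) (hx : is_leaf [set: S] x)
  (y : T) (hy : f_conjugate f x y) :
  f @: lexdown [set: T] y = lexdown [set: S] x /\
  rigid_surj_on (lexdown [set: T] y) (lexdown [set: S] x) f.
Proof.
case: hy => e [[[emap emeet elex eroot] fe ef] [hyl hlarge hnext]].
have fe' s : f (e s) = s by rewrite fe ?in_setT.
have ef' w : ot_anc (e (f w)) w by rewrite ef ?in_setT.
have einj : injective e by move=> a b h; rewrite -(fe' a) -(fe' b) h.
have eanc a b : ot_anc a b -> ot_anc (e a) (e b).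
  move=> h; have := emeet a b a (meetI (ancR HS a) h (fun u h1 _ => h1)).
  by case/meetP.
have elex' a b : lex [set: S] a b -> lex [set: T] (e a) (e b) by apply: elex.
have [hA hB] : (forall s, lex [set: S] s x -> lex [set: T] (e s) y) /\
               (forall w, lex [set: T] w y -> lex [set: S] (f w) x).
  have [L|NL] := boolP [forall z, is_leaf [set: S] z ==> lex [set: S] z x].
  - have [_ hymax] : largest_leaf [set: T] y.
      apply: hlarge; split=> // z hz; by move/forallP: L => /(_ z); rewrite hz.
    have allS s : lex [set: S] s x.
      have [l [hl hsl]] := leaf_above HS s.
      apply: (lex_trans HS (anc_lex HS hsl)).
      by move/forallP: L => /(_ l); rewrite hl.
    have allT w : lex [set: T] w y.
      have [l [hl hwl]] := leaf_above HT w.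
      exact: (lex_trans HT (anc_lex HT hwl) (hymax l hl)).
    by split=> *; [apply: allT|apply: allS].
  move/forallPn: NL => [z0]; rewrite negb_imply => /andP[hz0 nz0].
  have hxz0 : lex [set: S] x z0.
    by case: (lex_total HS z0 x) => h //; rewrite h in nz0.
  pose P := [pred z | is_leaf [set: S] z && lex_lt [set: S] x z].
  have Pz0 : P z0.
    rewrite /P /= hz0 /lex_lt hxz0 /=; apply/negP => /eqP e0; subst z0.
    by rewrite (lexR HS) in nz0.
  have [x' [/andP[hx'l hxx'] hmin]] := exmin (fun z => #|lexdown [set: S] z|) Pz0.
  have hnl : next_leaf [set: S] x x'.
    split=> // z hz hxz.
    case: (lex_total HS x' z) => // hzx'.
    case: (eqVneq z x') => [->|nzx]; first exact: (lexR HS x').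
    have := hmin z; rewrite /P /= hz hxz => /(_ isT); rewrite leqNgt => /negP; case.
    apply: proper_card; apply/properP; split.
    + apply/subsetP => u; rewrite !inD => hu; exact: (lex_trans HS hu hzx').
    + exists x'; rewrite !inD ?lexR //; apply/negP => h.
      by rewrite (lex_anti HS h hzx') eqxx in nzx.
  have [[hyl' /andP[hylt nyx'] [m [hm1 hm2]]] hymax] := hnext x' hnl.
  move/andP: hxx' => [hxx' nxx'].
  have [hax|bxx'] := (lexE HS x x').1 hxx'.
    by rewrite (leafP hx hax) eqxx in nxx'.
  have hbxx' := bxx'.
  case: bxx' => n [a [b [k1 k2 k3 k4 k5]]].
  have hn := br_meet HS k1 k2 k3 k4 k5.
  have em : m = e n by apply: (meet_uniq HT hm1); exact: emeet.
  subst m.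
  have [hnx hnx' _] := meetP hn.
  have [nxanc _] := br_nanc HS hbxx'.
  have hexy : lex [set: T] (e x) y.
    have [z [hzl hxz]] := leaf_above HT (e x).
    apply: (lex_trans HT (anc_lex HT hxz)); apply: hymax.
    have [ha|hb] := (lexE HT (e x) (e x')).1 (elex _ _ hxx').
      have : is_meet [set: T] (e x) (e x') (e x) by apply: meetI => //; apply: ancR.
      move/(meet_uniq HT hm1)/einj => exn.
      by rewrite -exn hnx' in nxanc.
    have hbz : br z (e x') by apply: br_up hb hxz.
    case: hb => m1 [c [c' [h1 h2 h3 h4 h5]]].
    have e1 : m1 = e n by apply: (meet_uniq HT (br_meet HT h1 h2 h3 h4 h5)).
    subst m1.
    split=> //.
    + rewrite /lex_lt (br_lex HT hbz) /=; apply/negP => /eqP ez.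
      by have [/negP []] := br_nanc HT hbz; rewrite ez; apply: ancR.
    + exists (e n); split; [exact: hm1|exact: (br_meet HT h1 h2 (ancT HT h3 hxz) h4 h5)].
  split.
  - move=> s hs; exact: (lex_trans HT (elex _ _ hs) hexy).
  move=> w hw; apply/negPn/negP => ns.
  set s := f w in ns.
  have hesw : ot_anc (e s) w by apply: ef'.
  have [key1 key2] : lex [set: T] y (e s) /\ y != e s.
    have hxs : lex [set: S] x s by case: (lex_total HS s x) => h //; rewrite h in ns.
    case: (lex_total HS s x') => hsx'; last first.
      have k := lex_trans HT hylt (elex _ _ hsx'); split=> //.
      apply/negP => /eqP eys; have kk := elex _ _ hsx'; rewrite -eys in kk.
      by rewrite (lex_anti HT hylt kk) eqxx in nyx'.
    have [ha|hb] := (lexE HS s x').1 hsx'; last first.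
      have [l [hl hsl]] := leaf_above HS s.
      have hbl : br l x' by apply: br_up hb hsl.
      have hxl : lex [set: S] x l := lex_trans HS hxs (anc_lex HS hsl).
      have nlx : x != l.
        apply/negP => /eqP exl; subst l.
        by rewrite (anc_lex HS hsl) in ns.
      have [_ _ hnl3] := hnl; have := (hnl3 l hl); rewrite /lex_lt hxl nlx => /(_ isT) hxpl.
      have el := lex_anti HS (br_lex HS hbl) hxpl; subst l.
      by have [/negP []] := br_nanc HS hbl; apply: ancR.
    have hns : ot_anc n s.
      case/orP: (ancC HS ha hnx') => // hsn.
      by rewrite (anc_lex HS (ancT HS hsn hnx)) in ns.
    have nns : e s != e n.
      apply/negP => /eqP /einj esn; rewrite esn in ns.
      by rewrite (anc_lex HS hnx) in ns.
    have hens := eanc _ _ hns; have hesx' := eanc _ _ ha.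
    have [hy1|hy2] := (lexE HT y (e x')).1 hylt.
      have : is_meet [set: T] y (e x') y by apply: meetI => //; apply: ancR.
      move/(meet_uniq HT hm2) => eyn; rewrite eyn in nns hens.
      split; first exact: (anc_lex HT hens).
      by rewrite eq_sym.
    case: hy2 => m0 [c [c' [h1 h2 h3 h4 h5]]].
    have e0 : m0 = e n by apply: (meet_uniq HT (br_meet HT h1 h2 h3 h4 h5)).
    subst m0.
    have hc's : ot_anc c' (e s).
      case/orP: (ancC HT h4 hesx') => // hsc.
      case: (eqVneq (e s) c') => [->|ne]; first exact: ancR.
      have := isucc_below HT h2 hsc ne => hsn.
      by rewrite (ancA HT hsn hens) eqxx in nns.
    have hbys : br y (e s) by exists (e n), c, c'.
    split; first exact: (br_lex HT hbys).
    apply/negP => /eqP eys.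
    by have [/negP []] := br_nanc HT hbys; rewrite eys; apply: ancR.
  have hyw := lex_trans HT key1 (anc_lex HT hesw).
  have ewy := lex_anti HT hw hyw; subst w.
  by rewrite (lex_anti HT key1 (anc_lex HT hesw)) eqxx in key2.
have hA' s : s \in lexdown [set: S] x -> e s \in lexdown [set: T] y.
  by rewrite !inD; apply: hA.
have hB' w : w \in lexdown [set: T] y -> f w \in lexdown [set: S] x.
  by rewrite !inD; apply: hB.
split.
- apply/setP => s; apply/idP/idP.
  + by case/imsetP => w hw ->; apply: hB'.
  + by move=> hs; apply/imsetP; exists (e s); [apply: hA'|rewrite fe'].
- split; first exact: hB'.
  exists e; split; [|by move=> s _; apply: fe'|by move=> w _; apply: ef'].
  split.
  + exact: hA'.
  + move=> v w m hm.
    have hv : v \in lexdown [set: S] x by case/and3P: hm.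
    have hw : w \in lexdown [set: S] x by case/and3P: hm.
    apply: (meet_AD HT) (hA' _ hv) (hA' _ hw) _.
    apply: emeet; exact: (meet_DA HS hm).
  + move=> v w hl.
    have hv : v \in lexdown [set: S] x by case/and3P: hl.
    have hw : w \in lexdown [set: S] x by case/and3P: hl.
    apply: (lex_AD HT) (hA' _ hv) (hA' _ hw) _.
    apply: elex; exact: (lex_DA HS hl).
  + move=> r hr; apply: (root_AD HT); apply: eroot; exact: (root_DA HS hr).
Qed.
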